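(* For every $M\in\Lambda^{001}$ the following are equivalent: (1) there exists $N\in\Lambda^{001}$ in β-normal form (containing no β-redex) such that $M\longrightarrow_\beta^\infty N$; (2) for every $d\in\mathbf N$ there exists $s\in\mathcal T(M)$ such that $\mathrm{nf}_r(s)$ contains a $d$-positive resource term.
   Context: $\Lambda^{001}$: possibly infinite λ-terms (trees of variables, abstractions and applications $(M)N$) whose infinite branches all enter infinitely often the argument position $N$ of an application, up to α-equivalence. $\longrightarrow_\beta^*$ is the reflexive-transitive closure of one-step β-reduction (contextual closure of $(\lambda x.M)N\to M[N/x]$); $\longrightarrow_\beta^\infty$ is defined by the rules (var) $M\longrightarrow_\beta^* x\Rightarrow M\longrightarrow_\beta^\infty x$, (λ) $M\longrightarrow_\beta^*\lambda x.P$, $P\longrightarrow_\beta^\infty P'\Rightarrow M\longrightarrow_\beta^\infty\lambda x.P'$, (@) $M\longrightarrow_\beta^*(P)Q$, $P\longrightarrow_\beta^\infty P'$, $Q\longrightarrow_\beta^\infty Q'\Rightarrow M\longrightarrow_\beta^\infty(P')Q'$, with possibly infinite derivations in which every infinite branch crosses infinitely often the third premise of (@). Resource terms: $s::=x\mid\lambda x.s\mid\langle s\rangle\bar t$, $\bar t$ a finite multiset of resource terms ($1$ the empty multiset); finite sums are finite sets of resource terms. Resource reduction $\longmapsto_r$ is generated by $\langle\lambda x.s\rangle\bar t\longmapsto_r s\langle\bar t/x\rangle$ (for $\bar t=[t_1,\dots,t_n]$: sum over $\sigma\in\mathfrak S_n$ of the linear substitutions of $t_{\sigma(i)}$ for the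 $i$-th free occurrence of $x$ when $x$ has exactly $n$ free occurrences in $s$, and the empty sum $0$ otherwise) and closed under all contexts; on finite sums, $\sum_{i=0}^n s_i\longrightarrow_r\sum_{i=0}^n T_i$ when $s_0\longmapsto_r T_0$ and each other $s_i$ either reduces to $T_i$ or equals it. This reduction is confluent and weakly normalising; $\mathrm{nf}_r(s)$ denotes the normal form (finite set) of $s$. Taylor approximation $\ltimes$ is inductive: $x\ltimes x$; $s\ltimes M\Rightarrow\lambda x.s\ltimes\lambda x.M$; ($s\ltimes M$ and $t_i\ltimes N$ for all $i$) $\Rightarrow\langle s\rangle[t_1,\dots,t_n]\ltimes(M)N$; $\mathcal T(M)=\{s : s\ltimes M\}$. $d$-positive resource terms: every resource term is 0-positive; for $d\ge1$, the $d$-positive terms are generated by $s::=x\mid\lambda x.s\mid\langle s\rangle\bar t$ where $s$ is $d$-positive and $\bar t$ is a non-empty multiset of $(d-1)$-positive terms. *)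

(* Defs.v *)
(* Terms are represented with de Bruijn indices, so that
   alpha-equivalence classes are exactly the (possibly infinite) trees. *)
From Stdlib Require Import Arith List Permutation Relations.
Import ListNotations.

CoInductive term : Type :=
| Var : nat -> term
| Lam : term -> term
| App : term -> term -> term.   (* App M N = (M)N, N in argument position *)

CoInductive bisim : term -> term -> Prop :=
| bisim_var n : bisim (Var n) (Var n)
| bisim_lam t t' : bisim t t' -> bisim (Lam t) (Lam t')
| bisim_app t u t' u' : bisim t t' -> bisim u u' -> bisim (App t u) (App t' u').

(* Finite layer of the 001 condition: along function/body positions the
   tree is finite; argument positions are handed over to P. *)
Inductive layer001 (P : term -> Prop) : term -> Prop :=
| l001_var n : layer001 P (Var n)
| l001_lam t : layer001 P t -> layer001 P (Lam t)
| l001_app t u : layer001 P t -> P u -> layer001 P (App t u).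

(* Lambda^{001}: greatest fixed point, i.e. every infinite branch enters
   the argument position of an application infinitely often. *)
Definition wf001 (M : term) : Prop :=
  exists P : term -> Prop, (forall t, P t -> layer001 P t) /\ P M.

CoFixpoint lift (c d : nat) (t : term) : term :=
  match t with
  | Var n => Var (if n <? c then n else n + d)
  | Lam t1 => Lam (lift (S c) d t1)
  | App t1 t2 => App (lift c d t1) (lift c d t2)
  end.

CoFixpoint subst (k : nat) (t u : term) : term :=
  match t with
  | Var n => if n <? k then Var n
             else if n =? k then lift 0 k u
             else Var (n - 1)
  | Lam t1 => Lam (subst (S k) t1 u)
  | App t1 t2 => App (subst k t1 u) (subst k t2 u)
  end.

Inductive beta_step : term -> term -> Prop :=
| bs_beta t u v : bisim v (subst 0 t u) -> beta_step (App (Lam t) u) v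
| bs_lam t t' : beta_step t t' -> beta_step (Lam t) (Lam t')
| bs_appl t t' u : beta_step t t' -> beta_step (App t u) (App t' u)
| bs_appr t u u' : beta_step u u' -> beta_step (App t u) (App t u').

Definition beta_star (M N : term) : Prop :=
  exists N', clos_refl_trans term beta_step M N' /\ bisim N' N.

(* Finite layer of an infinitary derivation: R is used only for the third
   premise of rule (@). *)
Inductive inf_layer (R : term -> term -> Prop) : term -> term -> Prop :=
| il_var M x : beta_star M (Var x) -> inf_layer R M (Var x)
| il_lam M P P' : beta_star M (Lam P) -> inf_layer R P P' ->
    inf_layer R M (Lam P')
| il_app M P Q P' Q' : beta_star M (App P Q) -> inf_layer R P P' -> R Q Q' ->
    inf_layer R M (App P' Q').

(* M -->^infty_beta N : possibly infinite derivations in which every infinite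
   branch crosses infinitely often the third premise of (@). *)
Definition beta_inf (M N : term) : Prop :=
  exists R : term -> term -> Prop,
    (forall a b, R a b -> inf_layer R a b) /\ R M N.

Inductive has_redex : term -> Prop :=
| hr_root t u : has_redex (App (Lam t) u)
| hr_lam t : has_redex t -> has_redex (Lam t)
| hr_appl t u : has_redex t -> has_redex (App t u)
| hr_appr t u : has_redex u -> has_redex (App t u).

Definition beta_normal (M : term) : Prop := ~ has_redex M.

(* Multisets are lists; everything below is invariant under permutation
   of bags. *)
Inductive rterm : Type :=
| RVar : nat -> rterm
| RLam : rterm -> rterm
| RApp : rterm -> list rterm -> rterm.

Fixpoint rlift (c d : nat) (s : rterm) : rterm :=
  match s with
  | RVar n => RVar (if n <? c then n else n + d)
  | RLam s1 => RLam (rlift (S c) d s1)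
  | RApp s1 b => RApp (rlift c d s1) (map (rlift c d) b)
  end.

(* lsub k s ts s' : s' is obtained from s by replacing the free occurrences
   of variable k by the elements of the multiset ts, each used exactly once
   (all possible distributions, i.e. all permutations sigma), other
   variables above k being decremented.  No s' exists if the number of
   occurrences differs from the size of ts. *)
Inductive lsub : nat -> rterm -> list rterm -> rterm -> Prop :=
| ls_hit k t : lsub k (RVar k) [t] (rlift 0 k t)
| ls_lt k n : n < k -> lsub k (RVar n) [] (RVar n)
| ls_gt k n : k < n -> lsub k (RVar n) [] (RVar (n - 1))
| ls_lam k s ts s' : lsub (S k) s ts s' -> lsub k (RLam s) ts (RLam s')
| ls_app k s b ts ts1 ts2 s' b' :
    Permutation ts (ts1 ++ ts2) -> lsub k s ts1 s' -> lsub_bag k b ts2 b' ->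
    lsub k (RApp s b) ts (RApp s' b')
with lsub_bag : nat -> list rterm -> list rterm -> list rterm -> Prop :=
| lb_nil k : lsub_bag k [] [] []
| lb_cons k u b ts ts1 ts2 u' b' :
    Permutation ts (ts1 ++ ts2) -> lsub k u ts1 u' -> lsub_bag k b ts2 b' ->
    lsub_bag k (u :: b) ts (u' :: b').

(* One-step resource reduction s |->_r T, T a finite sum (list). *)
Inductive rstep : rterm -> list rterm -> Prop :=
| rs_beta s b T : (forall u, In u T <-> lsub 0 s b u) ->
    rstep (RApp (RLam s) b) T
| rs_lam s T : rstep s T -> rstep (RLam s) (map RLam T)
| rs_appl s b T : rstep s T -> rstep (RApp s b) (map (fun s' => RApp s' b) T)
| rs_appr s b1 t b2 T : rstep t T ->
    rstep (RApp s (b1 ++ t :: b2)) (map (fun t' => RApp s (b1 ++ t' :: b2)) T).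

(* Reduction of finite sums: at least one summand reduces, the others
   reduce or stay. *)
Inductive sum_step_aux : list rterm -> list rterm -> bool -> Prop :=
| ssa_nil : sum_step_aux [] [] false
| ssa_keep s S T b : sum_step_aux S T b -> sum_step_aux (s :: S) (s :: T) b
| ssa_red s U S T b : rstep s U -> sum_step_aux S T b ->
    sum_step_aux (s :: S) (U ++ T) true.

Definition sum_step (S T : list rterm) : Prop := sum_step_aux S T true.

Inductive rhas_redex : rterm -> Prop :=
| rr_root s b : rhas_redex (RApp (RLam s) b)
| rr_lam s : rhas_redex s -> rhas_redex (RLam s)
| rr_appl s b : rhas_redex s -> rhas_redex (RApp s b)
| rr_appr s t b : In t b -> rhas_redex t -> rhas_redex (RApp s b).

Definition sum_normal (T : list rterm) : Prop :=
  forall t, In t T -> ~ rhas_redex t.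

(* is_nf_r s T : T is the normal form nf_r(s) of s (unique as a set, by
   confluence and weak normalisation). *)
Definition is_nf_r (s : rterm) (T : list rterm) : Prop :=
  clos_refl_trans (list rterm) sum_step [s] T /\ sum_normal T.

Inductive taylor : rterm -> term -> Prop :=
| ty_var n : taylor (RVar n) (Var n)
| ty_lam s M : taylor s M -> taylor (RLam s) (Lam M)
| ty_app s b M N : taylor s M -> (forall t, In t b -> taylor t N) ->
    taylor (RApp s b) (App M N).

Inductive dpos : nat -> rterm -> Prop :=
| dp_zero s : dpos 0 s
| dp_var d n : dpos (S d) (RVar n)
| dp_lam d s : dpos (S d) s -> dpos (S d) (RLam s)
| dp_app d s b : dpos (S d) s -> b <> [] -> (forall t, In t b -> dpos d t) ->
    dpos (S d) (RApp s b).

(* Main.v *)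
Require Import Defs.
From Stdlib Require Import Arith List Permutation Relations Lia Classical Bool ClassicalEpsilon.
Import ListNotations.

Fixpoint rterm_ind' (P : rterm -> Prop) (Hv : forall n, P (RVar n))
  (Hl : forall s, P s -> P (RLam s))
  (Ha : forall s b, P s -> Forall P b -> P (RApp s b)) (s : rterm) : P s :=
  match s with
  | RVar n => Hv n
  | RLam s1 => Hl s1 (rterm_ind' P Hv Hl Ha s1)
  | RApp s1 b => Ha s1 b (rterm_ind' P Hv Hl Ha s1)
      ((fix F (l : list rterm) : Forall P l :=
         match l with
         | [] => Forall_nil _
         | x :: l' => Forall_cons x (rterm_ind' P Hv Hl Ha x) (F l')
         end) b)
  end.

Fixpoint rsize (s : rterm) : nat :=
  match s with
  | RVar _ => 1
  | RLam s1 => S (rsize s1)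
  | RApp s1 b => S (rsize s1 + list_sum (map rsize b))
  end.

Definition bsize (b : list rterm) := list_sum (map rsize b).

Lemma bsize_app a b : bsize (a ++ b) = bsize a + bsize b.
Proof. unfold bsize. rewrite map_app, list_sum_app. reflexivity. Qed.

Lemma bsize_perm a b : Permutation a b -> bsize a = bsize b.
Proof. induction 1; unfold bsize in *; simpl; lia. Qed.

Lemma rsize_pos s : 0 < rsize s.
Proof. destruct s; simpl; lia. Qed.

Lemma rsize_rlift : forall s c d, rsize (rlift c d s) = rsize s.
Proof.
  induction s using rterm_ind'; intros; simpl; auto.
  rewrite IHs, map_map. do 2 f_equal.
  induction H; simpl; auto.
Qed.

Lemma map_ext_Forall {A B} (f g : A -> B) l :
  Forall (fun x => f x = g x) l -> map f l = map g l.
Proof. induction 1; simpl; f_equal; auto. Qed.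

Lemma rlift_comm : forall t c' k c d,
  rlift (c' + k + c) d (rlift c' k t) = rlift c' k (rlift (c' + c) d t).
Proof.
  induction t using rterm_ind'; intros; simpl.
  - f_equal. destruct (n <? c') eqn:E1; destruct (n <? c' + c) eqn:E2;
      repeat match goal with
      | H : (_ <? _) = true |- _ => apply Nat.ltb_lt in H
      | H : (_ <? _) = false |- _ => apply Nat.ltb_ge in H
      end;
      repeat match goal with |- context [?a <? ?b] => destruct (a <? b) eqn:?
      end;
      repeat match goal with
      | H : (_ <? _) = true |- _ => apply Nat.ltb_lt in H
      | H : (_ <? _) = false |- _ => apply Nat.ltb_ge in H
      end; lia.
  - f_equal. specialize (IHt (S c') k c d). simpl in IHt. exact IHt.
  - f_equal; auto. rewrite !map_map. apply map_ext_Forall.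
    eapply Forall_impl; [|exact H]. intros x Hx. apply Hx.
Qed.

Lemma rlift_rlift : forall t c' c j m, c <= m ->
  rlift (c' + c) j (rlift c' m t) = rlift c' (m + j) t.
Proof.
  induction t using rterm_ind'; intros; simpl.
  - f_equal.
      repeat match goal with |- context [?a <? ?b] => destruct (a <? b) eqn:?
      end;
      repeat match goal with
      | H : (_ <? _) = true |- _ => apply Nat.ltb_lt in H
      | H : (_ <? _) = false |- _ => apply Nat.ltb_ge in H
      end; lia.
  - f_equal. specialize (IHt (S c') c j m H). simpl in IHt. exact IHt.
  - f_equal; auto. rewrite !map_map. apply map_ext_Forall.
    eapply Forall_impl; [|exact H]. intros x Hx. apply Hx. auto.
Qed.

Scheme lsub_mut := Induction for lsub Sort Prop
  with lsub_bag_mut := Induction for lsub_bag Sort Prop.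
Combined Scheme lsub_comb from lsub_mut, lsub_bag_mut.

Lemma lsub_perm_both :
  (forall k s ts u, lsub k s ts u -> forall ts', Permutation ts ts' -> lsub k s ts' u) /\
  (forall k b ts b', lsub_bag k b ts b' -> forall ts', Permutation ts ts' -> lsub_bag k b ts' b').
Proof.
  apply (lsub_comb (fun k s ts u _ => forall ts', Permutation ts ts' -> lsub k s ts' u)
                  (fun k b ts b' _ => forall ts', Permutation ts ts' -> lsub_bag k b ts' b')); intros.
  - apply Permutation_length_1_inv in H. subst. constructor.
  - apply Permutation_nil in H. subst. now constructor.
  - apply Permutation_nil in H. subst. now constructor.
  - constructor. auto.
  - eapply ls_app; [eapply Permutation_trans; [apply Permutation_sym; exact H1 | exact p] | apply H; auto | apply H0; auto].
  - apply Permutation_nil in H. subst. constructor.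
  - eapply lb_cons; [eapply Permutation_trans; [apply Permutation_sym; exact H1 | exact p] | apply H; auto | apply H0; auto].
Qed.

Lemma lsub_perm k s ts u ts' : lsub k s ts u -> Permutation ts ts' -> lsub k s ts' u.
Proof. intros. eapply (proj1 lsub_perm_both); eauto. Qed.
Lemma lsub_bag_perm k s ts u ts' : lsub_bag k s ts u -> Permutation ts ts' -> lsub_bag k s ts' u.
Proof. intros. eapply (proj2 lsub_perm_both); eauto. Qed.

Lemma lsub_size_both :
  (forall k s ts u, lsub k s ts u -> rsize u + length ts = rsize s + bsize ts) /\
  (forall k b ts b', lsub_bag k b ts b' -> bsize b' + length ts = bsize b + bsize ts).
Proof.
  apply (lsub_comb (fun k s ts u _ => rsize u + length ts = rsize s + bsize ts)
    (fun k b ts b' _ => bsize b' + length ts = bsize b + bsize ts)); intros; simpl; unfold bsize in *; simpl in *;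
    try rewrite rsize_rlift; try lia.
  - apply Permutation_length in p as Hl. apply bsize_perm in p. unfold bsize in p.
    rewrite map_app, list_sum_app in p. rewrite length_app in Hl. lia.
  - apply Permutation_length in p as Hl. apply bsize_perm in p. unfold bsize in p.
    rewrite map_app, list_sum_app in p. rewrite length_app in Hl. lia.
Qed.

Fixpoint splits (l : list rterm) : list (list rterm * list rterm) :=
  match l with
  | [] => [([], [])]
  | x :: l' => flat_map (fun p => [(x :: fst p, snd p); (fst p, x :: snd p)]) (splits l')
  end.

Lemma splits_perm : forall l a c, In (a, c) (splits l) -> Permutation l (a ++ c).
Proof.
  induction l; simpl; intros.
  - destruct H as [H|[]]. inversion H; subst. constructor.
  - apply in_flat_map in H. destruct H as [[a' c'] [Hin H]]. simpl in H.
    destruct H as [H|[H|[]]]; inversion H; subst; simpl.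
    + constructor. auto.
    + apply Permutation_cons_app. auto.
Qed.

Lemma perm_splits : forall l t1 t2, Permutation l (t1 ++ t2) ->
  exists a c, In (a, c) (splits l) /\ Permutation a t1 /\ Permutation c t2.
Proof.
  induction l; simpl; intros.
  - apply Permutation_nil in H. apply app_eq_nil in H. destruct H; subst.
    exists [], []. auto.
  - assert (Hx : In a (t1 ++ t2)) by (eapply Permutation_in; [exact H| left; auto]).
    apply in_app_or in Hx. destruct Hx as [Hx|Hx].
    + apply in_split in Hx. destruct Hx as [u1 [v1 ->]].
      rewrite <- app_assoc in H. simpl in H.
      apply Permutation_cons_app_inv in H. rewrite app_assoc in H.
      destruct (IHl _ _ H) as [a' [c' [Hin [P1 P2]]]].
      exists (a :: a'), c'. split; [|split; auto].
      * apply in_flat_map. exists (a', c'). simpl. auto.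
      * apply Permutation_cons_app. auto.
    + apply in_split in Hx. destruct Hx as [u1 [v1 ->]].
      rewrite app_assoc in H.
      apply Permutation_cons_app_inv in H. rewrite <- app_assoc in H.
      destruct (IHl _ _ H) as [a' [c' [Hin [P1 P2]]]].
      exists a', (a :: c'). split; [|split; auto].
      * apply in_flat_map. exists (a', c'). simpl. auto.
      * apply Permutation_cons_app. auto.
Qed.

Lemma fin_union {A B} (Q : A -> B -> Prop) (ps : list A) :
  (forall x, In x ps -> exists Lx, forall u, In u Lx <-> Q x u) ->
  exists L, forall u, In u L <-> exists x, In x ps /\ Q x u.
Proof.
  induction ps; intros.
  - exists []. simpl. firstorder.
  - destruct (H a (or_introl eq_refl)) as [La HLa].
    destruct IHps as [L HL]. { intros. apply H. right. auto. }
    exists (La ++ L). intros u. rewrite in_app_iff, HLa, HL. simpl.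
    split.
    + intros [H1|[x [H2 H3]]]; eauto.
    + intros [x [[->|H2] H3]]; eauto.
Qed.

Lemma fin_prod {A B C} (P : A -> Prop) (Q : B -> Prop) (f : A -> B -> C) :
  (exists L1, forall x, In x L1 <-> P x) -> (exists L2, forall y, In y L2 <-> Q y) ->
  exists L, forall u, In u L <-> exists x y, P x /\ Q y /\ u = f x y.
Proof.
  intros [L1 H1] [L2 H2].
  exists (flat_map (fun x => map (f x) L2) L1). intros u.
  rewrite in_flat_map. split.
  - intros [x [Hx Hu]]. apply in_map_iff in Hu. destruct Hu as [y [<- Hy]].
    exists x, y. rewrite <- H1, <- H2. auto.
  - intros [x [y [Hx [Hy ->]]]]. exists x. rewrite H1. split; auto.
    apply in_map. apply H2. auto.
Qed.

Lemma lsub_app_iff k s b ts u :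
  lsub k (RApp s b) ts u <-> exists a c, In (a, c) (splits ts) /\
    exists s' b', lsub k s a s' /\ lsub_bag k b c b' /\ u = RApp s' b'.
Proof.
  split.
  - intros H. inversion H; subst.
    match goal with HH : Permutation ts _ |- _ => destruct (perm_splits _ _ _ HH) as [a [c [Hin [P1 P2]]]] end.
    exists a, c. split; auto. exists s', b'. split; [|split]; auto.
    + eapply lsub_perm; eauto. apply Permutation_sym; auto.
    + eapply lsub_bag_perm; eauto. apply Permutation_sym; auto.
  - intros [a [c [Hin [s' [b' [H1 [H2 ->]]]]]]].
    econstructor; eauto. apply splits_perm; auto.
Qed.

Lemma lsub_bag_cons_iff k x b ts r :
  lsub_bag k (x :: b) ts r <-> exists a c, In (a, c) (splits ts) /\
    exists x' b', lsub k x a x' /\ lsub_bag k b c b' /\ r = x' :: b'.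
Proof.
  split.
  - intros H. inversion H; subst.
    match goal with HH : Permutation ts _ |- _ => destruct (perm_splits _ _ _ HH) as [a [c [Hin [P1 P2]]]] end.
    exists a, c. split; auto. exists u', b'. split; [|split]; auto.
    + eapply lsub_perm; eauto. apply Permutation_sym; auto.
    + eapply lsub_bag_perm; eauto. apply Permutation_sym; auto.
  - intros [a [c [Hin [s' [b' [H1 [H2 ->]]]]]]].
    econstructor; eauto. apply splits_perm; auto.
Qed.

Lemma lsub_fin : forall s k ts, exists L, forall u, In u L <-> lsub k s ts u.
Proof.
  induction s using rterm_ind'; intros.
  - exists (match ts with
            | [] => if n <? k then [RVar n] else if k <? n then [RVar (n - 1)] else []
            | [t] => if n =? k then [rlift 0 k t] else []
            | _ => [] end).
    intros u. split.
    + destruct ts as [|t [|t' ts]].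
      * destruct (n <? k) eqn:E1; [|destruct (k <? n) eqn:E2]; simpl; intros [<-|[]] || intros [];
          [apply Nat.ltb_lt in E1; now constructor| apply Nat.ltb_lt in E2; now constructor].
      * destruct (n =? k) eqn:E; simpl; [|intros []]. intros [<-|[]].
        apply Nat.eqb_eq in E; subst. constructor.
      * simpl; intros [].
    + intros Hl. inversion Hl; subst.
      * rewrite Nat.eqb_refl. left; auto.
      * apply Nat.ltb_lt in H1. rewrite H1. left; auto.
      * destruct (n <? k) eqn:E; [apply Nat.ltb_lt in E; lia|].
        apply Nat.ltb_lt in H1. rewrite H1. left; auto.
  - destruct (IHs (S k) ts) as [L HL]. exists (map RLam L). intros u.
    rewrite in_map_iff. split.
    + intros [x [<- Hx]]. constructor. apply HL. auto.
    + intros Hl. inversion Hl; subst. exists s'. split; auto. apply HL; auto.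
  - assert (Hb : forall ts, exists L, forall r, In r L <-> lsub_bag k b ts r).
    { clear IHs ts. induction H; intros ts.
      - exists (match ts with [] => [[]] | _ => [] end). intros r.
        destruct ts; simpl; split.
        + intros [<-|[]]. constructor.
        + intros Hl; inversion Hl; auto.
        + intros [].
        + intros Hl; inversion Hl.
      - destruct (fin_union (fun p r => exists x' b', lsub k x (fst p) x' /\
              lsub_bag k l (snd p) b' /\ r = x' :: b') (splits ts)) as [L HL].
        { intros [a c] _. simpl. apply fin_prod; auto. }
        exists L. intros r. rewrite HL, lsub_bag_cons_iff. split.
        + intros [[a c] [Hin Hr]]. eauto.
        + intros [a [c [Hin Hr]]]. exists (a, c). auto. }
    destruct (fin_union (fun p u => exists s' b', lsub k s (fst p) s' /\
              lsub_bag k b (snd p) b' /\ u = RApp s' b') (splits ts)) as [L HL].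
    { intros [a c] _. simpl. apply fin_prod; auto. }
    exists L. intros u. rewrite HL, lsub_app_iff. split.
    + intros [[a c] [Hin Hr]]. eauto.
    + intros [a [c [Hin Hr]]]. exists (a, c). auto.
Qed.

Inductive rs1 : rterm -> rterm -> Prop :=
| r1_beta s b u : lsub 0 s b u -> rs1 (RApp (RLam s) b) u
| r1_lam s u : rs1 s u -> rs1 (RLam s) (RLam u)
| r1_appl s b u : rs1 s u -> rs1 (RApp s b) (RApp u b)
| r1_appr s b1 t b2 u : rs1 t u -> rs1 (RApp s (b1 ++ t :: b2)) (RApp s (b1 ++ u :: b2)).

Lemma rstep_rs1 s U : rstep s U -> forall u, In u U -> rs1 s u.
Proof.
  induction 1; intros; try (apply in_map_iff in H0; destruct H0 as [x [<- Hx]]).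
  - constructor. apply H. auto.
  - constructor; auto.
  - constructor; auto.
  - constructor; auto.
Qed.

Lemma rs1_rstep s u : rs1 s u -> exists U, rstep s U /\ In u U.
Proof.
  induction 1.
  - destruct (lsub_fin s 0 b) as [L HL]. exists L. split.
    + constructor. intros; rewrite HL; tauto.
    + apply HL; auto.
  - destruct IHrs1 as [U [H1 H2]]. exists (map RLam U). split. constructor; auto.
    apply in_map; auto.
  - destruct IHrs1 as [U [H1 H2]]. exists (map (fun s' => RApp s' b) U). split. constructor; auto.
    apply in_map with (f := fun s' => RApp s' b); auto.
  - destruct IHrs1 as [U [H1 H2]]. exists (map (fun t' => RApp s (b1 ++ t' :: b2)) U). split.
    constructor; auto.
    apply in_map with (f := fun t' => RApp s (b1 ++ t' :: b2)); auto.
Qed.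

Lemma redex_rstep s : rhas_redex s -> exists U, rstep s U.
Proof.
  induction 1.
  - destruct (lsub_fin s 0 b) as [L HL]. exists L. constructor. intros; rewrite HL; tauto.
  - destruct IHrhas_redex as [U HU]. exists (map RLam U). now apply rs_lam.
  - destruct IHrhas_redex as [U HU]. exists (map (fun s' => RApp s' b) U). now apply rs_appl.
  - destruct IHrhas_redex as [U HU]. apply in_split in H. destruct H as [b1 [b2 ->]].
    exists (map (fun t' => RApp s (b1 ++ t' :: b2)) U). now apply rs_appr.
Qed.

Lemma rs1_size s u : rs1 s u -> rsize u < rsize s.
Proof.
  induction 1; simpl.
  - apply (proj1 lsub_size_both) in H. unfold bsize in H. lia.
  - lia.
  - lia.
  - fold (bsize (b1 ++ t :: b2)). fold (bsize (b1 ++ u :: b2)).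
    rewrite !bsize_app. unfold bsize; simpl. lia.
Qed.

Definition reach := clos_refl_trans rterm rs1.
Definition sum_star := clos_refl_trans (list rterm) sum_step.

Lemma ssa_refl A : sum_step_aux A A false.
Proof. induction A; constructor; auto. Qed.

Lemma ssa_app A A' b1 : sum_step_aux A A' b1 -> forall B B' b2,
  sum_step_aux B B' b2 -> sum_step_aux (A ++ B) (A' ++ B') (orb b1 b2).
Proof.
  induction 1; intros; simpl; auto.
  - apply ssa_keep. apply IHsum_step_aux. auto.
  - rewrite <- app_assoc. apply ssa_red with (b := orb b b2); auto.
Qed.

Lemma sum_star_app A A' B B' : sum_star A A' -> sum_star B B' -> sum_star (A ++ B) (A' ++ B').
Proof.
  intros H1 H2. apply rt_trans with (A' ++ B).
  - clear H2. induction H1.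
    + apply rt_step. unfold sum_step in *. exact (ssa_app x y true H B B false (ssa_refl B)).
    + apply rt_refl.
    + eapply rt_trans; eauto.
  - clear H1. induction H2.
    + apply rt_step. unfold sum_step in *. exact (ssa_app A' A' false (ssa_refl A') x y true H).
    + apply rt_refl.
    + eapply rt_trans; eauto.
Qed.

Lemma rstep_sum s U : rstep s U -> sum_step [s] U.
Proof.
  intros H. unfold sum_step. rewrite <- (app_nil_r U). econstructor; eauto. constructor.
Qed.

Lemma reach_sum s u : reach s u -> exists T, sum_star [s] T /\ In u T.
Proof.
  intros H. apply clos_rt_rt1n in H. induction H.
  - exists [x]. split; [apply rt_refl| left; auto].
  - destruct IHclos_refl_trans_1n as [T [HT Hu]].
    apply rs1_rstep in H. destruct H as [U [HU Hy]].
    apply in_split in Hy. destruct Hy as [U1 [U2 ->]].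
    exists (U1 ++ T ++ U2). split.
    + eapply rt_trans. apply rt_step. apply rstep_sum. eauto.
      apply sum_star_app. apply rt_refl. change (y :: U2) with ([y] ++ U2).
      apply sum_star_app; auto. apply rt_refl.
    + apply in_or_app. right. apply in_or_app. left. auto.
Qed.

Lemma ssa_trace S T b : sum_step_aux S T b -> forall u, In u T -> exists x, In x S /\ reach x u.
Proof.
  induction 1; simpl; intros.
  - destruct H.
  - destruct H0 as [<-|H0]. exists s; split; auto; apply rt_refl.
    destruct (IHsum_step_aux u H0) as [x [Hx Hr]]. eauto.
  - apply in_app_or in H1. destruct H1 as [H1|H1].
    + exists s. split; auto. apply rt_step. eapply rstep_rs1; eauto.
    + destruct (IHsum_step_aux u H1) as [x [Hx Hr]]. eauto.
Qed.

Lemma sum_star_trace S T : sum_star S T -> forall u, In u T -> exists x, In x S /\ reach x u.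
Proof.
  induction 1; intros.
  - eapply ssa_trace; eauto.
  - exists u; split; auto; apply rt_refl.
  - destruct (IHclos_refl_trans2 u H1) as [y' [Hy Hr]].
    destruct (IHclos_refl_trans1 y' Hy) as [x' [Hx Hr']]. exists x'. split; auto.
    eapply rt_trans; eauto.
Qed.

Lemma nf_reach s T t : is_nf_r s T -> In t T -> reach s t /\ ~ rhas_redex t.
Proof.
  intros [H1 H2] Ht. split; auto.
  destruct (sum_star_trace _ _ H1 t Ht) as [x [[<-|[]] Hr]]. auto.
Qed.

Lemma rstep_size s U : rstep s U -> forall u, In u U -> rsize u < rsize s.
Proof. intros. apply rs1_size. eapply rstep_rs1; eauto. Qed.

Lemma wn_list U : (forall u, In u U -> exists T, sum_star [u] T /\ sum_normal T) ->
  exists T, sum_star U T /\ sum_normal T.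
Proof.
  induction U; intros.
  - exists []. split. apply rt_refl. intros t [].
  - destruct (H a (or_introl eq_refl)) as [Ta [Ha Na]].
    destruct IHU as [T [HT NT]]. { intros. apply H. right; auto. }
    exists (Ta ++ T). split.
    + change (a :: U) with ([a] ++ U). apply sum_star_app; auto.
    + intros t Ht. apply in_app_or in Ht. destruct Ht; auto.
Qed.

Lemma wn : forall n s, rsize s < n -> exists T, sum_star [s] T /\ sum_normal T.
Proof.
  induction n; intros. lia.
  destruct (classic (rhas_redex s)) as [Hr|Hr].
  - destruct (redex_rstep s Hr) as [U HU].
    destruct (wn_list U) as [T [HT NT]].
    { intros u Hu. apply IHn. pose proof (rstep_size _ _ HU u Hu). lia. }
    exists T. split; auto. eapply rt_trans; [apply rt_step, rstep_sum; eauto|]; auto.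
  - exists [s]. split. apply rt_refl. intros t [<-|[]]. auto.
Qed.

Lemma reach_nf s t : reach s t -> ~ rhas_redex t -> exists T, is_nf_r s T /\ In t T.
Proof.
  intros H Nt. destruct (reach_sum _ _ H) as [T0 [HT0 Ht]].
  apply in_split in Ht. destruct Ht as [A [B ->]].
  destruct (wn_list A) as [A' [HA NA]]. { intros. eapply wn; eauto. }
  destruct (wn_list B) as [B' [HB NB]]. { intros. eapply wn; eauto. }
  exists (A' ++ t :: B'). split; [split|].
  - eapply rt_trans; eauto. apply sum_star_app; auto.
    change (t :: B) with ([t] ++ B). change (t :: B') with ([t] ++ B').
    apply sum_star_app; auto. apply rt_refl.
  - intros x Hx. apply in_app_or in Hx. destruct Hx as [Hx|[<-|Hx]]; auto.
  - apply in_or_app. right. left. auto.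
Qed.

Lemma reach_lam x y : reach x y -> reach (RLam x) (RLam y).
Proof. induction 1. apply rt_step; constructor; auto. apply rt_refl. eapply rt_trans; eauto. Qed.
Lemma reach_appl x y b : reach x y -> reach (RApp x b) (RApp y b).
Proof. induction 1. apply rt_step; constructor; auto. apply rt_refl. eapply rt_trans; eauto. Qed.
Lemma reach_appr1 s b1 b2 t u : reach t u -> reach (RApp s (b1 ++ t :: b2)) (RApp s (b1 ++ u :: b2)).
Proof. induction 1. apply rt_step; constructor; auto. apply rt_refl. eapply rt_trans; eauto. Qed.
Lemma reach_bag s b b' : Forall2 reach b b' -> reach (RApp s b) (RApp s b').
Proof.
  intros H. cut (forall pre, reach (RApp s (pre ++ b)) (RApp s (pre ++ b'))).
  { intros C. apply (C []). }
  induction H; intros. apply rt_refl.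
  eapply rt_trans. apply reach_appr1. eauto.
  specialize (IHForall2 (pre ++ [y])). rewrite <- !app_assoc in IHForall2. exact IHForall2.
Qed.
Lemma reach_app x y b b' : reach x y -> Forall2 reach b b' -> reach (RApp x b) (RApp y b').
Proof. intros. eapply rt_trans. apply reach_appl; eauto. apply reach_bag; auto. Qed.

Lemma Forall2_refl_reach b : Forall2 reach b b.
Proof. induction b; constructor; auto. apply rt_refl. Qed.

Lemma Forall2_one_reach b1 b2 t u : reach t u -> Forall2 reach (b1 ++ t :: b2) (b1 ++ u :: b2).
Proof.
  intros. apply Forall2_app. apply Forall2_refl_reach. constructor; auto. apply Forall2_refl_reach.
Qed.

Lemma lsub_lift_both :
  (forall k p b u, lsub k p b u -> forall c d,
     lsub k (rlift (S c + k) d p) (map (rlift c d) b) (rlift (c + k) d u)) /\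
  (forall k l b r, lsub_bag k l b r -> forall c d,
     lsub_bag k (map (rlift (S c + k) d) l) (map (rlift c d) b) (map (rlift (c + k) d) r)).
Proof.
  apply (lsub_comb (fun k p b u _ => forall c d,
     lsub k (rlift (S c + k) d p) (map (rlift c d) b) (rlift (c + k) d u))
    (fun k l b r _ => forall c d,
     lsub_bag k (map (rlift (S c + k) d) l) (map (rlift c d) b) (map (rlift (c + k) d) r)));
    intros; simpl.
  - replace (k <? S (c + k)) with true by (symmetry; apply Nat.ltb_lt; lia).
    pose proof (rlift_comm t 0 k c d). simpl in H. rewrite Nat.add_comm, H. constructor.
  - replace (n <? S (c + k)) with true by (symmetry; apply Nat.ltb_lt; lia).
    replace (n <? c + k) with true by (symmetry; apply Nat.ltb_lt; lia). constructor; auto.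
  - destruct (n <? S (c + k)) eqn:E1; destruct (n - 1 <? c + k) eqn:E2;
      [apply Nat.ltb_lt in E1; apply Nat.ltb_lt in E2|apply Nat.ltb_lt in E1; apply Nat.ltb_ge in E2
      |apply Nat.ltb_ge in E1; apply Nat.ltb_lt in E2|apply Nat.ltb_ge in E1; apply Nat.ltb_ge in E2];
      try lia.
    + constructor; auto.
    + replace (n - 1 + d) with (n + d - 1) by lia. apply ls_gt. lia.
  - constructor. specialize (H c d). simpl in H. rewrite !Nat.add_succ_r in H. exact H.
  - econstructor; eauto. rewrite <- map_app. apply Permutation_map. auto.
  - constructor.
  - econstructor; eauto. rewrite <- map_app. apply Permutation_map. auto.
Qed.

Lemma rs1_lift s u : rs1 s u -> forall c d, rs1 (rlift c d s) (rlift c d u).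
Proof.
  induction 1; intros; simpl.
  - constructor. pose proof (proj1 lsub_lift_both _ _ _ _ H c d). simpl in H0.
    rewrite !Nat.add_0_r in H0. exact H0.
  - constructor; auto.
  - constructor; auto.
  - rewrite !map_app. simpl. constructor. auto.
Qed.

Lemma reach_lift s u c d : reach s u -> reach (rlift c d s) (rlift c d u).
Proof. induction 1. apply rt_step, rs1_lift; auto. apply rt_refl. eapply rt_trans; eauto. Qed.

Lemma perm4 {A} (a b c d : list A) : Permutation ((a ++ b) ++ (c ++ d)) ((a ++ c) ++ (b ++ d)).
Proof.
  rewrite <- !app_assoc. apply Permutation_app_head. rewrite !app_assoc.
  apply Permutation_app_tail. apply Permutation_app_comm.
Qed.

Lemma Forall2_perm {A B} (R : A -> B -> Prop) b b1 c1 :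
  Forall2 R b b1 -> Permutation b1 c1 -> exists c, Permutation b c /\ Forall2 R c c1.
Proof.
  intros H P. revert b H. induction P; intros.
  - inversion H; subst. exists []. auto.
  - inversion H; subst. destruct (IHP _ H4) as [c [P1 F1]]. exists (x0 :: c). split; auto.
  - inversion H; subst. inversion H4; subst. exists (x1 :: x0 :: l1). split. constructor.
    constructor; auto.
  - destruct (IHP1 _ H) as [c [Q1 G1]]. destruct (IHP2 _ G1) as [c' [Q2 G2]].
    exists c'. split; auto. eapply Permutation_trans; eauto.
Qed.

Lemma lsub_bag_app k l1 t1 r1 : lsub_bag k l1 t1 r1 -> forall l2 t2 r2,
  lsub_bag k l2 t2 r2 -> lsub_bag k (l1 ++ l2) (t1 ++ t2) (r1 ++ r2).
Proof.
  induction 1; intros; simpl; auto.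
  apply lb_cons with (ts1 := ts1) (ts2 := ts2 ++ t2); auto. rewrite app_assoc. apply Permutation_app_tail. auto.
Qed.

Lemma lsub_bag_app_inv k c1 : forall c2 ts r, lsub_bag k (c1 ++ c2) ts r ->
  exists ts1 ts2 r1 r2, Permutation ts (ts1 ++ ts2) /\ lsub_bag k c1 ts1 r1 /\
    lsub_bag k c2 ts2 r2 /\ r = r1 ++ r2.
Proof.
  induction c1; simpl; intros.
  - exists [], ts, [], r. split; auto. split. constructor. auto.
  - inversion H; subst. destruct (IHc1 _ _ _ H7) as [t1 [t2 [r1 [r2 [P [B1 [B2 ->]]]]]]].
    exists (ts1 ++ t1), t2, (u' :: r1), r2. split; [|split; [|split]]; auto.
    + rewrite <- app_assoc. eapply Permutation_trans; eauto. apply Permutation_app_head; auto.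
    + econstructor; eauto.
Qed.

Lemma lsub_bag_perm_in k l l' : Permutation l l' -> forall ts r', lsub_bag k l' ts r' ->
  exists r, Permutation r r' /\ lsub_bag k l ts r.
Proof.
  induction 1; intros.
  - inversion H; subst. exists []. split; auto.
  - inversion H0; subst. destruct (IHPermutation _ _ H8) as [r [P B]].
    exists (u' :: r). split; auto. econstructor; eauto.
  - inversion H; subst. inversion H7; subst.
    exists (u'0 :: u' :: b'0). split. constructor.
    econstructor.
    2: eauto.
    2: { econstructor. 2: eauto. 2: eauto. apply Permutation_refl. }
    eapply Permutation_trans; eauto. eapply Permutation_trans.
    apply Permutation_app_head; eauto. rewrite !app_assoc. apply Permutation_app_tail.
    apply Permutation_app_comm.
  - destruct (IHPermutation2 _ _ H1) as [r1 [P1 B1]]. destruct (IHPermutation1 _ _ B1) as [r0 [P0 B0]].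
    exists r0. split; auto. eapply Permutation_trans; eauto.
Qed.

Lemma lsub_bag_nil_inv k ts r : lsub_bag k [] ts r -> ts = [] /\ r = [].
Proof. intros H; inversion H; auto. Qed.

Ltac ltb_facts :=
  repeat match goal with
  | H : (_ <? _) = true |- _ => apply Nat.ltb_lt in H
  | H : (_ <? _) = false |- _ => apply Nat.ltb_ge in H
  end.

Lemma lsub_dec : forall x c j m, j <= m -> lsub (c + j) (rlift c (S m) x) [] (rlift c m x).
Proof.
  induction x using rterm_ind'; intros; simpl.
  - destruct (n <? c) eqn:E; ltb_facts.
    + constructor. lia.
    + replace (n + m) with (n + S m - 1) by lia. constructor. lia.
  - constructor. apply (IHx (S c)). auto.
  - apply ls_app with (ts1 := []) (ts2 := []). constructor. auto.
    induction H; simpl. constructor.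
    apply lb_cons with (ts1 := []) (ts2 := []). constructor. auto. auto.
Qed.

Lemma lsub_liftsub : forall x c j k b u1, lsub (c + j + k) (rlift c j x) b u1 ->
  exists x', lsub (c + k) x b x' /\ u1 = rlift c j x'.
Proof.
  induction x using rterm_ind'; intros; simpl in *.
  - destruct (n <? c) eqn:E; ltb_facts.
    + inversion H; subst; try lia. exists (RVar n). split. constructor. lia.
      simpl. replace (n <? c) with true by (symmetry; apply Nat.ltb_lt; auto). auto.
    + inversion H; subst.
      * exists (rlift 0 (c + k) t). split. replace n with (c + k) by lia. constructor.
        pose proof (rlift_rlift t 0 c j (c + k)). simpl in H0. rewrite H0 by lia.
        f_equal. lia.
      * exists (RVar n). split. constructor. lia. simpl.
        replace (n <? c) with false by (symmetry; apply Nat.ltb_ge; auto). auto.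
      * exists (RVar (n - 1)). split. constructor. lia. simpl.
        replace (n - 1 <? c) with false by (symmetry; apply Nat.ltb_ge; lia). f_equal. lia.
  - inversion H; subst. specialize (IHx (S c) j k b s'). simpl in IHx.
    match goal with HH : lsub _ (rlift _ _ _) _ _ |- _ => destruct (IHx HH) as [x' [H1 ->]] end. exists (RLam x'). split; auto. constructor. auto.
  - inversion H0; subst.
    match goal with HH : lsub _ (rlift _ _ _) _ _ |- _ => destruct (IHx _ _ _ _ _ HH) as [x' [H1 ->]]; clear HH end.
    assert (Hb : forall ts2 r, lsub_bag (c + j + k) (map (rlift c j) b) ts2 r ->
       exists l', lsub_bag (c + k) b ts2 l' /\ r = map (rlift c j) l').
    { clear - H. induction H; intros; simpl in *.
      - inversion H; subst. exists []. split; auto. constructor.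
      - inversion H1; subst.
        match goal with HH : lsub _ (rlift _ _ _) _ _ |- _ => destruct (H _ _ _ _ _ HH) as [y [Hy ->]] end.
        match goal with HH : lsub_bag _ _ _ _ |- _ => destruct (IHForall _ _ HH) as [l' [Hl ->]] end.
        exists (y :: l'). split; auto. econstructor; eauto. }
    match goal with HH : lsub_bag _ _ _ _ |- _ => destruct (Hb _ _ HH) as [l' [Hl ->]] end.
    exists (RApp x' l'). split; auto. econstructor; eauto.
Qed.

Lemma subst_lemma_both :
  (forall j q e p1, lsub j q e p1 -> forall k b u1, lsub (j + k) p1 b u1 ->
     exists b1 b2 q' e', Permutation b (b1 ++ b2) /\ lsub (S (j + k)) q b1 q' /\
       lsub_bag k e b2 e' /\ lsub j q' e' u1) /\
  (forall j c e c', lsub_bag j c e c' -> forall k b cc, lsub_bag (j + k) c' b cc ->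
     exists b1 b2 c0 e', Permutation b (b1 ++ b2) /\ lsub_bag (S (j + k)) c b1 c0 /\
       lsub_bag k e b2 e' /\ lsub_bag j c0 e' cc).
Proof.
  apply (lsub_comb (fun j q e p1 _ => forall k b u1, lsub (j + k) p1 b u1 ->
     exists b1 b2 q' e', Permutation b (b1 ++ b2) /\ lsub (S (j + k)) q b1 q' /\
       lsub_bag k e b2 e' /\ lsub j q' e' u1)
    (fun j c e c' _ => forall k b cc, lsub_bag (j + k) c' b cc ->
     exists b1 b2 c0 e', Permutation b (b1 ++ b2) /\ lsub_bag (S (j + k)) c b1 c0 /\
       lsub_bag k e b2 e' /\ lsub_bag j c0 e' cc)); intros.
  -
    rename k into j, k0 into k.
    pose proof (lsub_liftsub t 0 j k b u1) as L. simpl in L.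
    destruct (L H) as [x' [Hx ->]].
    exists [], b, (RVar j), [x']. split; [simpl; auto|split; [|split]].
    + constructor. lia.
    + apply lb_cons with (ts1 := b) (ts2 := []). rewrite app_nil_r; auto. auto. constructor.
    + constructor.
  - rename k into j, k0 into k.
    inversion H; subst; try lia. exists [], [], (RVar n), []. repeat split; auto; (constructor || auto); lia.
  - rename k into j, k0 into k.
    inversion H; subst.
    + exists [t], [], (rlift 0 (S (j + k)) t), []. split; [simpl; auto|split; [|split]].
      * replace n with (S (j + k)) by lia. constructor.
      * constructor.
      * pose proof (lsub_dec t 0 j (j + k)). simpl in H0. apply H0. lia.
    + exists [], [], (RVar n), []. split; [simpl; auto|split; [|split]].
      constructor. lia. constructor. constructor. lia.
    + exists [], [], (RVar (n - 1)), []. split; [simpl; auto|split; [|split]].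
      constructor. lia. constructor. replace (n - 1 - 1) with (n - 1 - 1) by lia. constructor. lia.
  -
    rename k into j, k0 into k.
    inversion H0; subst. match goal with HH : lsub (S _) _ _ _ |- _ => destruct (H k _ _ HH) as [b1 [b2 [q' [e' [P [A [B C]]]]]]] end.
    exists b1, b2, (RLam q'), e'. split; auto. split; [|split]; auto; constructor; auto.
  -
    rename k into j, k0 into k.
    inversion H1; subst.
    match goal with HP : Permutation _ (?A ++ ?B), HA : lsub (j + k) _ ?A _,
       HB : lsub_bag (j + k) _ ?B _ |- _ =>
      destruct (H _ _ _ HA) as [ba1 [ba2 [q0' [e1' [Pa [Aa [Ba Ca]]]]]]];
      destruct (H0 _ _ _ HB) as [bb1 [bb2 [c0 [e2' [Pb [Ab [Bb Cb]]]]]]];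
      assert (Be : lsub_bag k (ts1 ++ ts2) (ba2 ++ bb2) (e1' ++ e2')) by (apply lsub_bag_app; auto);
      destruct (lsub_bag_perm_in _ _ _ p _ _ Be) as [e'' [Pe Be']];
      exists (ba1 ++ bb1), (ba2 ++ bb2), (RApp q0' c0), e''; split; [|split; [|split]]; auto;
      [ eapply Permutation_trans; [exact HP|]; eapply Permutation_trans;
        [apply Permutation_app; eauto | apply perm4]
      | econstructor; eauto | econstructor; eauto ]
    end.
  - inversion H; subst. exists [], [], [], []. repeat split; auto; constructor.
  - rename k into j, k0 into k.
    inversion H1; subst.
    match goal with HP : Permutation _ (?A ++ ?B), HA : lsub (j + k) _ ?A _,
       HB : lsub_bag (j + k) _ ?B _ |- _ =>
      destruct (H _ _ _ HA) as [ba1 [ba2 [q0' [e1' [Pa [Aa [Ba Ca]]]]]]];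
      destruct (H0 _ _ _ HB) as [bb1 [bb2 [c0 [e2' [Pb [Ab [Bb Cb]]]]]]];
      assert (Be : lsub_bag k (ts1 ++ ts2) (ba2 ++ bb2) (e1' ++ e2')) by (apply lsub_bag_app; auto);
      destruct (lsub_bag_perm_in _ _ _ p _ _ Be) as [e'' [Pe Be']];
      exists (ba1 ++ bb1), (ba2 ++ bb2), (q0' :: c0), e''; split; [|split; [|split]]; auto;
      [ eapply Permutation_trans; [exact HP|]; eapply Permutation_trans;
        [apply Permutation_app; eauto | apply perm4]
      | econstructor; eauto | econstructor; eauto ]
    end.
Qed.

Lemma subst_red_R_both :
  (forall k p b' u1, lsub k p b' u1 -> forall b, Forall2 reach b b' ->
     exists u, lsub k p b u /\ reach u u1) /\
  (forall k c b' c1, lsub_bag k c b' c1 -> forall b, Forall2 reach b b' ->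
     exists c0, lsub_bag k c b c0 /\ Forall2 reach c0 c1).
Proof.
  apply (lsub_comb (fun k p b' u1 _ => forall b, Forall2 reach b b' ->
     exists u, lsub k p b u /\ reach u u1)
    (fun k c b' c1 _ => forall b, Forall2 reach b b' ->
     exists c0, lsub_bag k c b c0 /\ Forall2 reach c0 c1)); intros.
  - inversion H; subst. inversion H4; subst. exists (rlift 0 k x). split. constructor.
    apply reach_lift; auto.
  - inversion H; subst. exists (RVar n). split. constructor; auto. apply rt_refl.
  - inversion H; subst. exists (RVar (n - 1)). split. constructor; auto. apply rt_refl.
  - destruct (H _ H0) as [u [Hu Hr]]. exists (RLam u). split. constructor; auto. apply reach_lam; auto.
  - destruct (Forall2_perm _ _ _ _ H1 p) as [c [Pc Fc]].
    apply Forall2_app_inv_r in Fc. destruct Fc as [c1 [c2 [F1 [F2 ->]]]].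
    destruct (H _ F1) as [u [Hu Hr]]. destruct (H0 _ F2) as [c0 [Hc Fr]].
    exists (RApp u c0). split. econstructor; eauto. apply reach_app; auto.
  - inversion H; subst. exists []. split; constructor.
  - destruct (Forall2_perm _ _ _ _ H1 p) as [c [Pc Fc]].
    apply Forall2_app_inv_r in Fc. destruct Fc as [c1 [c2 [F1 [F2 ->]]]].
    destruct (H _ F1) as [u0 [Hu Hr]]. destruct (H0 _ F2) as [c0 [Hc Fr]].
    exists (u0 :: c0). split. econstructor; eauto. constructor; auto.
Qed.

Lemma subst_red_R k p b b' u1 : Forall2 reach b b' -> lsub k p b' u1 ->
  exists u, lsub k p b u /\ reach u u1.
Proof. intros. eapply (proj1 subst_red_R_both); eauto. Qed.

Lemma subst_red_L p p' : rs1 p p' -> forall k b u1, lsub k p' b u1 ->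
  exists u, lsub k p b u /\ reach u u1.
Proof.
  induction 1; intros.
  - destruct (proj1 subst_lemma_both 0 s b u H k b0 u1 H0)
      as [b1 [b2 [q' [e' [P [A [B C]]]]]]].
    exists (RApp (RLam q') e'). split.
    + econstructor; eauto. constructor. auto.
    + apply rt_step. constructor. auto.
  - inversion H0; subst.
    match goal with HH : lsub (S k) _ _ _ |- _ => destruct (IHrs1 _ _ _ HH) as [u0 [Hu Hr]] end.
    exists (RLam u0). split. constructor; auto. apply reach_lam; auto.
  - inversion H0; subst.
    match goal with HH : lsub k u _ _ |- _ => destruct (IHrs1 _ _ _ HH) as [u0 [Hu Hr]] end.
    exists (RApp u0 b'). split. econstructor; eauto. apply reach_appl; auto.
  - inversion H0; subst.
    match goal with HH : lsub_bag k _ _ _ |- _ =>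
      destruct (lsub_bag_app_inv _ _ _ _ _ HH) as [tA [tB [rA [rB [PA [BA [BB ->]]]]]]] end.
    inversion BB; subst.
    match goal with HH : lsub k u _ _ |- _ => destruct (IHrs1 _ _ _ HH) as [u0 [Hu Hr]] end.
    exists (RApp s' (rA ++ u0 :: b')). split.
    + econstructor; eauto. eapply lsub_bag_perm. 2: apply Permutation_sym; eauto.
      apply lsub_bag_app; auto. econstructor; eauto.
    + apply reach_appr1. auto.
Qed.

Fixpoint lamsR (n : nat) (s : rterm) : rterm :=
  match n with 0 => s | S n => RLam (lamsR n s) end.
Fixpoint appsR (s : rterm) (bs : list (list rterm)) : rterm :=
  match bs with [] => s | b :: bs => RApp (appsR s bs) b end.

Lemma reach_ctx n bs X Y : reach X Y -> reach (lamsR n (appsR X bs)) (lamsR n (appsR Y bs)).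
Proof.
  intros H. induction n; simpl. induction bs; simpl; auto. apply reach_appl; auto.
  apply reach_lam; auto.
Qed.

Lemma appsR_app_notlam p b bs q : appsR (RApp p b) bs <> RLam q.
Proof. destruct bs; simpl; discriminate. Qed.
Lemma appsR_var_notlam z bs q : appsR (RVar z) bs <> RLam q.
Proof. destruct bs; simpl; discriminate. Qed.

Lemma rs1_hctx_inv n bs X y : (forall q, X <> RLam q) ->
  rs1 (lamsR n (appsR X bs)) y ->
  (exists X', rs1 X X' /\ y = lamsR n (appsR X' bs)) \/
  (exists bs', y = lamsR n (appsR X bs') /\
     forall X0, reach (lamsR n (appsR X0 bs)) (lamsR n (appsR X0 bs'))).
Proof.
  intros NL. revert y. induction n; simpl; intros.
  - revert y H. induction bs; simpl; intros.
    + left. exists y. auto.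
    + inversion H; subst.
      * exfalso. destruct bs; simpl in *. eapply NL; eauto. discriminate.
      * destruct (IHbs _ H3) as [[X' [H1 ->]]|[bs' [-> Hr]]].
        -- left. exists X'. auto.
        -- right. exists (a :: bs'). split; auto. intros. simpl. apply reach_appl. auto.
      * right. exists ((b1 ++ u :: b2) :: bs). split; auto. intros. simpl.
        apply reach_appr1. apply rt_step. auto.
  - inversion H; subst. destruct (IHn _ H1) as [[X' [H2 ->]]|[bs' [-> Hr]]].
    + left. exists X'. auto.
    + right. exists bs'. split; auto. intros. apply reach_lam. auto.
Qed.

Lemma redex_hctx n bs X : rhas_redex X -> rhas_redex (lamsR n (appsR X bs)).
Proof.
  intros. induction n; simpl. induction bs; simpl; auto. constructor; auto. constructor; auto.
Qed.

Lemma head_first : forall x t, clos_refl_trans_1n rterm rs1 x t -> ~ rhas_redex t ->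
  forall n bs p b, x = lamsR n (appsR (RApp (RLam p) b) bs) ->
  exists u, lsub 0 p b u /\ reach (lamsR n (appsR u bs)) t.
Proof.
  induction 1; intros Nt n bs p b Ex; subst.
  - exfalso. apply Nt. apply redex_hctx. constructor.
  - destruct (rs1_hctx_inv n bs (RApp (RLam p) b) y) as [[X' [HX ->]]|[bs' [-> Hr]]]; auto.
    + intros q; discriminate.
    + inversion HX; subst.
      * exists X'. split; auto. apply clos_rt1n_rt. auto.
      * match goal with HH : rs1 (RLam p) _ |- _ => inversion HH; subst end.
        match goal with HH : rs1 p ?u |- _ =>
          destruct (IHclos_refl_trans_1n Nt n bs u b eq_refl) as [u1 [Hu1 Hr1]];
          destruct (subst_red_L _ _ HH 0 b u1 Hu1) as [u0' [Hu0 Hr0]] end.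
        exists u0'. split; auto. eapply rt_trans; [apply reach_ctx; eauto|]; auto.
      * match goal with HH : rs1 ?t0 ?u |- _ =>
        destruct (IHclos_refl_trans_1n Nt n bs p (b1 ++ u :: b2) eq_refl) as [u1 [Hu1 Hr1]];
        destruct (subst_red_R 0 p (b1 ++ t0 :: b2) (b1 ++ u :: b2) u1) as [u0' [Hu0 Hr0]]; auto;
        [apply Forall2_one_reach; apply rt_step; auto|] end.
        exists u0'. split; auto. eapply rt_trans; [apply reach_ctx; eauto|]; auto.
    + destruct (IHclos_refl_trans_1n Nt n bs' p b eq_refl) as [u1 [Hu1 Hr1]].
      exists u1. split; auto. eapply rt_trans; [apply Hr|]; eauto.
Qed.

Lemma head_first' n bs p b t : reach (lamsR n (appsR (RApp (RLam p) b) bs)) t -> ~ rhas_redex t ->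
  exists u, lsub 0 p b u /\ reach (lamsR n (appsR u bs)) t.
Proof. intros H Nt. apply clos_rt_rt1n in H. eapply head_first; eauto. Qed.

Definition bags_reach := Forall2 (Forall2 reach).

Lemma bags_reach_refl bs : bags_reach bs bs.
Proof. induction bs; constructor; auto. apply Forall2_refl_reach. Qed.

Lemma Forall2_reach_trans a b c : Forall2 reach a b -> Forall2 reach b c -> Forall2 reach a c.
Proof.
  intros H. revert c. induction H; intros c H'; inversion H'; subst; constructor; auto.
  eapply rt_trans; eauto.
Qed.

Lemma bags_reach_trans a b c : bags_reach a b -> bags_reach b c -> bags_reach a c.
Proof.
  unfold bags_reach. intros H. revert c. induction H; intros c H'; inversion H'; subst; constructor; auto.
  eapply Forall2_reach_trans; eauto.
Qed.

Lemma rs1_var_inv n z bs y : rs1 (lamsR n (appsR (RVar z) bs)) y ->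
  exists bs', y = lamsR n (appsR (RVar z) bs') /\ bags_reach bs bs'.
Proof.
  revert y. induction n; simpl; intros.
  - revert y H. induction bs; simpl; intros.
    + inversion H.
    + inversion H; subst.
      * exfalso. eapply appsR_var_notlam; eauto.
      * destruct (IHbs _ H3) as [bs' [-> Hr]]. exists (a :: bs'). split; auto.
        constructor; auto. apply Forall2_refl_reach.
      * exists ((b1 ++ u :: b2) :: bs). split; auto. constructor.
        apply Forall2_one_reach. apply rt_step; auto. apply bags_reach_refl.
  - inversion H; subst. destruct (IHn _ H1) as [bs' [-> Hr]]. exists bs'. auto.
Qed.

Lemma reach_var_shape n z bs t : reach (lamsR n (appsR (RVar z) bs)) t ->
  exists bs', t = lamsR n (appsR (RVar z) bs') /\ bags_reach bs bs'.
Proof.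
  intros H. apply clos_rt_rt1n in H. remember (lamsR n (appsR (RVar z) bs)) as x.
  revert bs Heqx. induction H; intros; subst.
  - exists bs. split; auto. apply bags_reach_refl.
  - destruct (rs1_var_inv _ _ _ _ H) as [bs1 [-> Hr1]].
    destruct (IHclos_refl_trans_1n bs1 eq_refl) as [bs2 [-> Hr2]].
    exists bs2. split; auto. eapply bags_reach_trans; eauto.
Qed.

Definition frob (t : term) : term :=
  match t with Var n => Var n | Lam t => Lam t | App a b => App a b end.
Lemma frob_eq t : t = frob t.
Proof. destruct t; reflexivity. Qed.

Lemma lift_var c d n : lift c d (Var n) = Var (if n <? c then n else n + d).
Proof. rewrite (frob_eq (lift c d (Var n))). reflexivity. Qed.
Lemma lift_lam c d t : lift c d (Lam t) = Lam (lift (S c) d t).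
Proof. rewrite (frob_eq (lift c d (Lam t))). reflexivity. Qed.
Lemma lift_app c d t u : lift c d (App t u) = App (lift c d t) (lift c d u).
Proof. rewrite (frob_eq (lift c d (App t u))). reflexivity. Qed.
Lemma subst_var k n u : subst k (Var n) u =
  if n <? k then Var n else if n =? k then lift 0 k u else Var (n - 1).
Proof. rewrite (frob_eq (subst k (Var n) u)). simpl.
  destruct (n <? k); auto. destruct (n =? k); auto. symmetry; apply frob_eq. Qed.
Lemma subst_lam k t u : subst k (Lam t) u = Lam (subst (S k) t u).
Proof. rewrite (frob_eq (subst k (Lam t) u)). reflexivity. Qed.
Lemma subst_app k t1 t2 u : subst k (App t1 t2) u = App (subst k t1 u) (subst k t2 u).
Proof. rewrite (frob_eq (subst k (App t1 t2) u)). reflexivity. Qed.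

Lemma bisim_refl : forall t, bisim t t.
Proof.
  cofix CH. intros t. destruct t; constructor; apply CH.
Qed.

Lemma taylor_bisim : forall t X Y, bisim X Y -> (taylor t X <-> taylor t Y).
Proof.
  induction t using rterm_ind'; intros X Y HB; split; intros HT; inversion HT; subst;
    inversion HB; subst; constructor;
    try match goal with
    | HH : bisim ?a ?b |- taylor _ ?b => apply (proj1 (IHt _ _ HH)); auto
    | HH : bisim ?a ?b |- taylor _ ?a => apply (proj2 (IHt _ _ HH)); auto
    end;
    intros x Hx; rewrite Forall_forall in H;
    match goal with
    | HH : bisim ?a ?b |- taylor x ?b => apply (proj1 (H x Hx _ _ HH)); auto
    | HH : bisim ?a ?b |- taylor x ?a => apply (proj2 (H x Hx _ _ HH)); auto
    end.
Qed.

Lemma taylor_lift t U : taylor t U -> forall c d, taylor (rlift c d t) (lift c d U).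
Proof.
  induction 1; intros; simpl.
  - rewrite lift_var. constructor.
  - rewrite lift_lam. constructor. auto.
  - rewrite lift_app. constructor. auto. intros x Hx. apply in_map_iff in Hx.
    destruct Hx as [y [<- Hy]]. auto.
Qed.

Lemma taylor_lift_inv : forall t c d U, taylor t (lift c d U) ->
  exists t0, taylor t0 U /\ t = rlift c d t0.
Proof.
  induction t using rterm_ind'; intros c d U HT; destruct U;
    try rewrite lift_var in HT; try rewrite lift_lam in HT; try rewrite lift_app in HT;
    inversion HT; subst.
  - exists (RVar n0). split. constructor. reflexivity.
  - match goal with HH : taylor t (lift _ _ _) |- _ => destruct (IHt _ _ _ HH) as [t0 [Ht0 ->]] end.
    exists (RLam t0). split. constructor; auto. auto.
  - match goal with HH : taylor _ (lift _ _ U1) |- _ => destruct (IHt _ _ _ HH) as [t0 [Ht0 ->]] end.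
    match goal with HH : forall x, In x b -> taylor x (lift _ _ _) |- _ => rename HH into H5 end.
    assert (Hb : exists b0, (forall x, In x b0 -> taylor x U2) /\ b = map (rlift c d) b0).
    { clear HT IHt. induction H.
      - exists []. split; auto. intros x [].
      - destruct (H c d U2) as [y [Hy ->]]. apply H5. left; auto.
        destruct IHForall as [b0 [Hb0 ->]]. intros; apply H5; right; auto.
        exists (y :: b0). split; auto. intros z [<-|Hz]; auto. }
    destruct Hb as [b0 [Hb0 ->]]. exists (RApp t0 b0). split. constructor; auto. auto.
Qed.

Lemma taylor_subst_both :
  (forall k p b u, lsub k p b u -> forall T U, taylor p T -> (forall x, In x b -> taylor x U) ->
     taylor u (subst k T U)) /\
  (forall k l b r, lsub_bag k l b r -> forall T U, (forall y, In y l -> taylor y T) ->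
     (forall x, In x b -> taylor x U) -> forall y, In y r -> taylor y (subst k T U)).
Proof.
  apply (lsub_comb (fun k p b u _ => forall T U, taylor p T -> (forall x, In x b -> taylor x U) ->
     taylor u (subst k T U))
    (fun k l b r _ => forall T U, (forall y, In y l -> taylor y T) ->
     (forall x, In x b -> taylor x U) -> forall y, In y r -> taylor y (subst k T U))); intros.
  - inversion H; subst. rewrite subst_var, Nat.ltb_irrefl, Nat.eqb_refl.
    apply taylor_lift. apply H0. left; auto.
  - inversion H; subst. rewrite subst_var. replace (n <? k) with true by (symmetry; apply Nat.ltb_lt; auto).
    constructor.
  - inversion H; subst. rewrite subst_var. replace (n <? k) with false by (symmetry; apply Nat.ltb_ge; lia).
    replace (n =? k) with false by (symmetry; apply Nat.eqb_neq; lia). constructor.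
  - inversion H0; subst. rewrite subst_lam. constructor. apply H; auto.
  - inversion H1; subst. rewrite subst_app. constructor.
    + apply H; auto. intros x Hx. apply H2. eapply Permutation_in. apply Permutation_sym; eauto.
      apply in_or_app; auto.
    + apply H0; auto. intros x Hx. apply H2. eapply Permutation_in. apply Permutation_sym; eauto.
      apply in_or_app; auto.
  - destruct H1.
  - destruct H3 as [<-|H3].
    + apply H; [apply H1; left; auto|]. intros x Hx. apply H2. eapply Permutation_in. apply Permutation_sym; eauto.
      apply in_or_app; auto.
    + eapply H0; [intros; apply H1; right; auto| |eauto]. intros x Hx. apply H2. eapply Permutation_in. apply Permutation_sym; eauto.
      apply in_or_app; auto.
Qed.

Lemma taylor_subst k p b u T U : lsub k p b u -> taylor p T -> (forall x, In x b -> taylor x U) ->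
  taylor u (subst k T U).
Proof. intros. eapply (proj1 taylor_subst_both); eauto. Qed.

Lemma taylor_subst_inv : forall u k T U, taylor u (subst k T U) ->
  exists p b, taylor p T /\ (forall x, In x b -> taylor x U) /\ lsub k p b u.
Proof.
  induction u using rterm_ind'; intros k T U HT; destruct T as [m|T1|T1 T2].
  all: try (rewrite subst_var in HT; destruct (m <? k) eqn:E1;
    [inversion HT; subst; (apply Nat.ltb_lt in E1; exists (RVar m), []; split; [constructor|];
       split; [intros x []|]; constructor; auto)
    | destruct (m =? k) eqn:E2;
      [apply Nat.eqb_eq in E2; rewrite E2 in *; apply taylor_lift_inv in HT; destruct HT as [t0 [Ht0 Heq]];
       rewrite Heq; exists (RVar k), [t0]; split; [constructor|]; split;
       [intros x [<-|[]]; auto| constructor]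
      | inversion HT; subst; (apply Nat.ltb_ge in E1; apply Nat.eqb_neq in E2;
        exists (RVar m), []; split; [constructor|]; split; [intros x []|]; constructor; lia)]]).
  all: try (rewrite subst_lam in HT; inversion HT; subst).
  all: try (rewrite subst_app in HT; inversion HT; subst).
  - match goal with HH : taylor _ (subst _ _ _) |- _ => destruct (IHu _ _ _ HH) as [p [b [Hp1 [Hp2 Hp3]]]] end.
    exists (RLam p), b. split. constructor; auto.
    split; auto. constructor; auto.
  - match goal with HH : taylor _ (subst _ T1 _) |- _ => destruct (IHu _ _ _ HH) as [p [b1 [Hp1 [Hp2 Hp4]]]] end.
    match goal with HH : forall x, In x b -> taylor x (subst _ _ _) |- _ => rename HH into H5 end.
    assert (Hb : exists pc bc, (forall y, In y pc -> taylor y T2) /\ (forall x, In x bc -> taylor x U)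
                 /\ lsub_bag k pc bc b).
    { clear HT IHu Hp1 Hp2 Hp4. induction H.
      - exists [], []. split; [intros x []|]. split; [intros x []|]. constructor.
      - destruct (H k T2 U) as [py [by_ [Hy1 [Hy2 Hy3]]]]. apply H5; left; auto.
        destruct IHForall as [pc [bc [Hc1 [Hc2 Hc3]]]]. intros; apply H5; right; auto.
        exists (py :: pc), (by_ ++ bc). split; [intros z [<-|Hz]; auto|].
        split. intros x0 Hx; apply in_app_or in Hx; destruct Hx; auto.
        econstructor; eauto. }
    destruct Hb as [pc [bc [Hc1 [Hc2 Hc3]]]].
    exists (RApp p pc), (b1 ++ bc). split. constructor; auto.
    split. intros x Hx; apply in_app_or in Hx; destruct Hx; auto.
    econstructor; eauto.
Qed.

Fixpoint lamsM (n : nat) (M : term) : term :=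
  match n with 0 => M | S n => Lam (lamsM n M) end.
Fixpoint appsM (M : term) (Qs : list term) : term :=
  match Qs with [] => M | Q :: Qs => App (appsM M Qs) Q end.

Definition hred M M' := exists n Qs P Q, M = lamsM n (appsM (App (Lam P) Q) Qs) /\
  M' = lamsM n (appsM (subst 0 P Q) Qs).
Definition hnfM H := exists n z Qs, H = lamsM n (appsM (Var z) Qs).
Definition isHead X := (exists z, X = Var z) \/ (exists P Q, X = App (Lam P) Q).

Lemma appsM_notlam X Qs P : isHead X -> appsM X Qs <> Lam P.
Proof. intros [[z ->]|[P' [Q ->]]]; destruct Qs; simpl; discriminate. Qed.

Lemma appsM_unique X X' : isHead X -> isHead X' -> forall Qs Qs',
  appsM X Qs = appsM X' Qs' -> Qs = Qs' /\ X = X'.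
Proof.
  intros HX HX'. induction Qs; destruct Qs'; simpl; intros E.
  - auto.
  - exfalso. destruct HX as [[z ->]|[P [Q ->]]]. discriminate.
    injection E; intros _ E'. eapply appsM_notlam; [exact HX'|]. symmetry; eauto.
  - exfalso. destruct HX' as [[z ->]|[P [Q ->]]]. discriminate.
    injection E; intros _ E'. eapply appsM_notlam; [exact HX|]. eauto.
  - injection E; intros E1 E2. destruct (IHQs _ E2). subst. auto.
Qed.

Lemma decomp_unique X X' : isHead X -> isHead X' -> forall n n' Qs Qs',
  lamsM n (appsM X Qs) = lamsM n' (appsM X' Qs') -> n = n' /\ Qs = Qs' /\ X = X'.
Proof.
  intros HX HX'. induction n; destruct n'; simpl; intros Qs Qs' E.
  - destruct (appsM_unique _ _ HX HX' _ _ E). auto.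
  - exfalso. exact (appsM_notlam X Qs _ HX E).
  - exfalso. exact (appsM_notlam X' Qs' _ HX' (eq_sym E)).
  - injection E; intros E'. destruct (IHn _ _ _ E') as [-> [-> ->]]. auto.
Qed.

Lemma hred_det M M1 M2 : hred M M1 -> hred M M2 -> M1 = M2.
Proof.
  intros [n [Qs [P [Q [-> ->]]]]] [n' [Qs' [P' [Q' [E ->]]]]].
  apply decomp_unique in E; try (right; eauto; fail). destruct E as [-> [-> E]].
  injection E; intros -> ->. auto.
Qed.

Lemma hnf_nored H H' : hnfM H -> ~ hred H H'.
Proof.
  intros [n [z [Qs ->]]] [n' [Qs' [P [Q [E _]]]]].
  apply decomp_unique in E; [|left; eauto|right; eauto]. destruct E as [_ [_ E]]. discriminate.
Qed.

Definition hstar := clos_refl_trans_1n term hred.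

Lemma hnf_unique M H1 : hstar M H1 -> hnfM H1 -> forall H2, hstar M H2 -> hnfM H2 -> H1 = H2.
Proof.
  induction 1; intros N1 H2 S2 N2.
  - inversion S2; subst; auto. exfalso. match goal with HH : hred x _ |- _ => exact (hnf_nored _ _ N1 HH) end.
  - inversion S2; subst.
    + exfalso. match goal with HH : hred _ y |- _ => exact (hnf_nored _ _ N2 HH) end.
    + assert (y = y0) by (eapply hred_det; eauto). subst. eauto.
Qed.

Lemma hred_beta M M' : hred M M' -> beta_step M M'.
Proof.
  intros [n [Qs [P [Q [-> ->]]]]]. induction n; simpl.
  - induction Qs; simpl. constructor. apply bisim_refl. constructor; auto.
  - constructor; auto.
Qed.

Lemma hstar_beta M H : hstar M H -> clos_refl_trans term beta_step M H.
Proof. induction 1. apply rt_refl. eapply rt_trans; eauto. apply rt_step, hred_beta; auto. Qed.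

Definition bagsT (bs : list (list rterm)) (Qs : list term) :=
  Forall2 (fun b Q => forall x, In x b -> taylor x Q) bs Qs.

Lemma taylor_ctx_inv n bs X M : taylor (lamsR n (appsR X bs)) M ->
  exists X' Qs, M = lamsM n (appsM X' Qs) /\ taylor X X' /\ bagsT bs Qs.
Proof.
  revert M. induction n; simpl; intros M HT.
  - revert M HT. induction bs; simpl; intros M HT.
    + exists M, []. split; auto. split; auto. constructor.
    + inversion HT; subst. destruct (IHbs _ H1) as [X' [Qs [-> [G1 G3]]]].
      exists X', (N :: Qs). split; auto. split; auto. constructor; auto.
  - inversion HT; subst. match goal with HH : taylor (lamsR _ _) _ |- _ => destruct (IHn _ HH) as [X' [Qs [-> [G2 G3]]]] end.
    exists X', Qs. auto.
Qed.

Lemma taylor_ctx n bs Qs X X' : taylor X X' -> bagsT bs Qs ->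
  taylor (lamsR n (appsR X bs)) (lamsM n (appsM X' Qs)).
Proof.
  intros HX HB. induction n; simpl.
  - induction HB; simpl; auto. constructor; auto.
  - constructor; auto.
Qed.

Lemma rterm_shape s : (exists n z bs, s = lamsR n (appsR (RVar z) bs)) \/
  (exists n bs p b, s = lamsR n (appsR (RApp (RLam p) b) bs)).
Proof.
  induction s using rterm_ind'.
  - left. exists 0, n, []. auto.
  - destruct IHs as [[n [z [bs ->]]]|[n [bs [p [b ->]]]]].
    + left. exists (S n), z, bs. auto.
    + right. exists (S n), bs, p, b. auto.
  - clear H. destruct IHs as [[n [z [bs ->]]]|[n [bs [p [b0 ->]]]]].
    + destruct n.
      * left. exists 0, z, (b :: bs). auto.
      * right. exists 0, [], (lamsR n (appsR (RVar z) bs)), b. auto.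
    + destruct n.
      * right. exists 0, (b :: bs), p, b0. auto.
      * right. exists 0, [], (lamsR n (appsR (RApp (RLam p) b0) bs)), b. auto.
Qed.

Lemma rsize_ctx n bs X Y : rsize X < rsize Y ->
  rsize (lamsR n (appsR X bs)) < rsize (lamsR n (appsR Y bs)).
Proof.
  intros H. induction n; simpl; [|lia]. induction bs; simpl; auto. lia.
Qed.

Lemma D1 : forall N s M t, rsize s < N -> taylor s M -> reach s t -> ~ rhas_redex t ->
  exists H s', hstar M H /\ hnfM H /\ taylor s' H /\ reach s' t.
Proof.
  induction N; intros s M t Hs HT Hr Nt. lia.
  destruct (rterm_shape s) as [[n [z [bs ->]]]|[n [bs [p [b ->]]]]].
  - destruct (taylor_ctx_inv _ _ _ _ HT) as [X' [Qs [-> [HX HB]]]].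
    inversion HX; subst.
    exists (lamsM n (appsM (Var z) Qs)), (lamsR n (appsR (RVar z) bs)).
    split. constructor. split. exists n, z, Qs. auto. auto.
  - destruct (taylor_ctx_inv _ _ _ _ HT) as [X' [Qs [-> [HX HB]]]].
    inversion HX; subst. match goal with HH : taylor (RLam _) _ |- _ => inversion HH; subst end.
    destruct (head_first' _ _ _ _ _ Hr Nt) as [u [Hu Hru]].
    assert (Tu : taylor u (subst 0 M0 N0)) by (eapply taylor_subst; eauto).
    assert (Su : rsize (lamsR n (appsR u bs)) < N).
    { pose proof (rsize_ctx n bs u (RApp (RLam p) b)) as C.
      assert (rsize u < rsize (RApp (RLam p) b)) by (apply rs1_size; constructor; auto). lia. }
    destruct (IHN _ (lamsM n (appsM (subst 0 M0 N0) Qs)) t Su) as [H [s' [K1 [K3 [K4 K5]]]]]; auto.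
    apply taylor_ctx; auto.
    exists H, s'. split; auto. econstructor; eauto. exists n, Qs, M0, N0. auto.
Qed.

Definition Good (M : term) := forall d, exists s, taylor s M /\
  exists t, reach s t /\ ~ rhas_redex t /\ dpos d t.

Definition stT (st : nat * nat * list term) : term :=
  lamsM (fst (fst st)) (appsM (Var (snd (fst st))) (snd st)).

Definition choose (M : term) : nat * nat * list term :=
  epsilon (inhabits (0, 0, [])) (fun st => hstar M (stT st)).

CoFixpoint bld (n z : nat) (Qs : list term) : term :=
  match n with
  | S n' => Lam (bld n' z Qs)
  | 0 => match Qs with
         | [] => Var z
         | Q :: Qs' => App (bld 0 z Qs')
             (bld (fst (fst (choose Q))) (snd (fst (choose Q))) (snd (choose Q)))
         end
  end.

Definition NF (M : term) : term :=
  bld (fst (fst (choose M))) (snd (fst (choose M))) (snd (choose M)).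

Lemma bld_S n z Qs : bld (S n) z Qs = Lam (bld n z Qs).
Proof. rewrite (frob_eq (bld (S n) z Qs)). reflexivity. Qed.
Lemma bld_nil z : bld 0 z [] = Var z.
Proof. rewrite (frob_eq (bld 0 z [])). reflexivity. Qed.
Lemma bld_cons z Q Qs : bld 0 z (Q :: Qs) = App (bld 0 z Qs) (NF Q).
Proof. rewrite (frob_eq (bld 0 z (Q :: Qs))). reflexivity. Qed.

Lemma Good_hnf M : Good M -> hstar M (stT (choose M)).
Proof.
  intros G. destruct (G 0) as [s [Hs [t [Hr [Nt _]]]]].
  destruct (D1 (S (rsize s)) s M t) as [H [s' [H1 [[n [z [Qs ->]]] _]]]]; auto.
  unfold choose. apply (epsilon_spec (inhabits (0, 0, [])) (fun st => hstar M (stT st))).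
  exists (n, z, Qs). exact H1.
Qed.

Lemma taylor_hnf_inv n z Qs s : taylor s (lamsM n (appsM (Var z) Qs)) ->
  exists bs, s = lamsR n (appsR (RVar z) bs) /\ bagsT bs Qs.
Proof.
  revert s. induction n; simpl; intros s HT.
  - revert s HT. induction Qs; simpl; intros s HT.
    + inversion HT; subst. exists []. split; auto. constructor.
    + inversion HT; subst. match goal with HH : taylor _ (appsM _ _) |- _ =>
        destruct (IHQs _ HH) as [bs [-> G]] end.
      exists (b :: bs). split; auto. constructor; auto.
  - inversion HT; subst. match goal with HH : taylor _ (lamsM _ _) |- _ =>
        destruct (IHn _ HH) as [bs [-> G]] end. exists bs. auto.
Qed.

Lemma dpos_hnf_inv d n z bs : dpos (S d) (lamsR n (appsR (RVar z) bs)) ->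
  forall b, In b bs -> b <> [] /\ forall x, In x b -> dpos d x.
Proof.
  induction n; simpl; intros H.
  - induction bs; simpl; intros b0 Hb. destruct Hb.
    inversion H; subst. destruct Hb as [<-|Hb]; auto.
  - inversion H; subst. auto.
Qed.

Lemma nf_hnf_inv n z bs : ~ rhas_redex (lamsR n (appsR (RVar z) bs)) ->
  forall b, In b bs -> forall x, In x b -> ~ rhas_redex x.
Proof.
  intros H b Hb x Hx Rx. apply H. clear H. induction n; simpl.
  - induction bs; simpl. destruct Hb. destruct Hb as [<-|Hb].
    + eapply rr_appr; eauto.
    + apply rr_appl. auto.
  - apply rr_lam. auto.
Qed.

Lemma pick (P : rterm -> Prop) : forall bs Qs bs', bagsT bs Qs -> bags_reach bs bs' ->
  (forall b, In b bs' -> b <> [] /\ forall x, In x b -> P x) ->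
  forall Q, In Q Qs -> exists y x, taylor y Q /\ reach y x /\ P x.
Proof.
  intros bs Qs bs' HT. revert bs'. induction HT; intros bs' HR HP Q HQ. destruct HQ.
  inversion HR; subst. destruct HQ as [<-|HQ].
  - destruct (HP y0 (or_introl eq_refl)) as [Hne HPx].
    destruct y0 as [|x0 y0]. congruence.
    match goal with HH : Forall2 reach x (x0 :: y0) |- _ => inversion HH; subst end.
    exists x1, x0. split; [apply H; left; auto|]. split; auto. apply HPx; left; auto.
  - eapply IHHT; eauto. intros; apply HP; right; auto.
Qed.

Lemma Good_args M : Good M -> forall Q, In Q (snd (choose M)) -> Good Q.
Proof.
  intros G Q HQ d. destruct (G (S d)) as [s [Hs [t [Hr [Nt Dt]]]]].
  destruct (D1 (S (rsize s)) s M t) as [H [s' [H1 [NH [H3 H4]]]]]; auto.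
  assert (E : H = stT (choose M)).
  { eapply hnf_unique; eauto. apply Good_hnf; auto.
    exists (fst (fst (choose M))), (snd (fst (choose M))), (snd (choose M)). reflexivity. }
  subst H. unfold stT in H3. destruct (choose M) as [[n z] Qs]. simpl in *.
  destruct (taylor_hnf_inv _ _ _ _ H3) as [bs [-> TB]].
  destruct (reach_var_shape _ _ _ _ H4) as [bs' [-> RB]].
  destruct (pick (fun x => ~ rhas_redex x /\ dpos d x) bs Qs bs' TB RB) with (Q := Q)
    as [y [x [Hy [Hyx [Nx Dx]]]]]; auto.
  intros b Hb. destruct (dpos_hnf_inv _ _ _ _ Dt b Hb). split; auto.
  intros x Hx. split; auto. eapply nf_hnf_inv; eauto.
  exists y. split; auto. exists x. auto.
Qed.

Lemma bld_layer n z Qs : layer001 (fun x => exists n z Qs, x = bld n z Qs) (bld n z Qs).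
Proof.
  induction n.
  - induction Qs. rewrite bld_nil. constructor.
    rewrite bld_cons. constructor; auto. unfold NF. eauto.
  - rewrite bld_S. constructor; auto.
Qed.

Lemma bld_wf n z Qs : wf001 (bld n z Qs).
Proof.
  exists (fun x => exists n z Qs, x = bld n z Qs). split.
  - intros t [n' [z' [Qs' ->]]]. apply bld_layer.
  - eauto.
Qed.

Lemma bld_normal : forall x, has_redex x -> forall n z Qs, x <> bld n z Qs.
Proof.
  induction 1; intros n z Qs E.
  - destruct n. destruct Qs. rewrite bld_nil in E. discriminate.
    rewrite bld_cons in E. injection E; intros _ E'.
    destruct Qs. rewrite bld_nil in E'. discriminate. rewrite bld_cons in E'. discriminate.
    rewrite bld_S in E. discriminate.
  - destruct n. destruct Qs. rewrite bld_nil in E. discriminate. rewrite bld_cons in E. discriminate.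
    rewrite bld_S in E. injection E; intros. eapply IHhas_redex; eauto.
  - destruct n. destruct Qs. rewrite bld_nil in E. discriminate. rewrite bld_cons in E.
    injection E; intros. eapply IHhas_redex; eauto.
    rewrite bld_S in E. discriminate.
  - destruct n. destruct Qs. rewrite bld_nil in E. discriminate. rewrite bld_cons in E.
    injection E; intros. unfold NF in *. eapply IHhas_redex; eauto.
    rewrite bld_S in E. discriminate.
Qed.

Lemma beta_star_refl M : beta_star M M.
Proof. exists M. split. apply rt_refl. apply bisim_refl. Qed.

Definition Rg (a b : term) := Good a /\ b = NF a.

Lemma bld_inf : forall n z Qs, (forall Q, In Q Qs -> Good Q) ->
  forall a, beta_star a (lamsM n (appsM (Var z) Qs)) -> inf_layer Rg a (bld n z Qs).
Proof.
  induction n; intros z Qs HG a Ha.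
  - revert a Ha. induction Qs; intros a0 Ha; simpl in Ha.
    + rewrite bld_nil. constructor. auto.
    + rewrite bld_cons. econstructor. exact Ha.
      apply IHQs. intros; apply HG; right; auto. apply beta_star_refl.
      split; auto. apply HG. left; auto.
  - rewrite bld_S. simpl in Ha. econstructor. exact Ha. apply IHn; auto. apply beta_star_refl.
Qed.

Lemma Good_inf M : Good M -> beta_inf M (NF M).
Proof.
  intros G. exists Rg. split; [|split; auto].
  intros a b [Ga ->]. unfold NF. apply bld_inf.
  - apply Good_args; auto.
  - pose proof (Good_hnf a Ga) as Hh. apply hstar_beta in Hh. exists (stT (choose a)).
    split; auto. apply bisim_refl.
Qed.

Lemma dir21 M : (forall d : nat, exists s : rterm, taylor s M /\
      exists T : list rterm, is_nf_r s T /\ exists t : rterm, In t T /\ dpos d t) ->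
  exists N : term, wf001 N /\ beta_normal N /\ beta_inf M N.
Proof.
  intros H. assert (G : Good M).
  { intros d. destruct (H d) as [s [Hs [T [HT [t [Ht Dt]]]]]].
    destruct (nf_reach _ _ _ HT Ht). exists s. split; auto. exists t. auto. }
  exists (NF M). split; [|split].
  - apply bld_wf.
  - intros R. eapply bld_normal; eauto. reflexivity.
  - apply Good_inf; auto.
Qed.

Lemma taylor_normal t X : taylor t X -> ~ has_redex X -> ~ rhas_redex t.
Proof.
  intros HT NX R. revert X HT NX. induction R; intros X HT NX; inversion HT; subst.
  - match goal with HH : taylor (RLam _) _ |- _ => inversion HH; subst end.
    apply NX. constructor.
  - eapply IHR; eauto. intros Hr. apply NX. constructor. auto.
  - eapply IHR; eauto. intros Hr. apply NX. apply hr_appl. auto.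
  - eapply IHR; eauto. intros Hr. apply NX. apply hr_appr. auto.
Qed.

Lemma dpos_approx (P : term -> Prop) (HP : forall t, P t -> layer001 P t) :
  forall d x, P x -> exists t, taylor t x /\ dpos d t.
Proof.
  induction d; intros x Px.
  - assert (L := HP x Px). clear Px. induction L.
    + exists (RVar n). split; constructor.
    + destruct IHL as [t0 [H1 _]]. exists (RLam t0). split; constructor; auto.
    + destruct IHL as [t0 [H1 _]]. exists (RApp t0 []). split. constructor; auto.
      intros y []. constructor.
  - assert (L := HP x Px). clear Px. induction L.
    + exists (RVar n). split; constructor.
    + destruct IHL as [t0 [H1 H2]]. exists (RLam t0). split; constructor; auto.
    + destruct IHL as [t0 [H1 H2]]. destruct (IHd u H) as [tu [Hu Du]].
      exists (RApp t0 [tu]). split. constructor; auto. intros y [<-|[]]; auto.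
      constructor; auto. discriminate. intros y [<-|[]]; auto.
Qed.

Lemma list_sim (Q : rterm -> Prop) b : (forall x, In x b -> exists s, Q s /\ reach s x) ->
  exists sb, Forall2 reach sb b /\ forall y, In y sb -> Q y.
Proof.
  induction b; intros H.
  - exists []. split; auto. intros y [].
  - destruct (H a (or_introl eq_refl)) as [s [Qs Rs]].
    destruct IHb as [sb [F Hs]]. intros; apply H; right; auto.
    exists (s :: sb). split. constructor; auto. intros y [<-|Hy]; auto.
Qed.

Lemma sim_step M M' : beta_step M M' -> forall t, taylor t M' -> exists s, taylor s M /\ reach s t.
Proof.
  induction 1; intros t0 HT.
  - apply (taylor_bisim t0 _ _ H) in HT. apply taylor_subst_inv in HT.
    destruct HT as [p [b [Hp [Hb Hl]]]]. exists (RApp (RLam p) b). split.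
    constructor; auto. constructor; auto. apply rt_step. constructor. auto.
  - inversion HT; subst. match goal with HH : taylor _ t' |- _ =>
      destruct (IHbeta_step _ HH) as [s1 [Hs Rs]] end.
    exists (RLam s1). split. constructor; auto. apply reach_lam; auto.
  - inversion HT; subst. match goal with HH : taylor _ t' |- _ =>
      destruct (IHbeta_step _ HH) as [s1 [Hs Rs]] end.
    exists (RApp s1 b). split. constructor; auto. apply reach_appl; auto.
  - inversion HT; subst.
    destruct (list_sim (fun y => taylor y u) b) as [sb [F Hsb]].
    { intros x Hx. apply IHbeta_step. auto. }
    exists (RApp s sb). split. constructor; auto. apply reach_bag; auto.
Qed.

Lemma sim_star M X t : beta_star M X -> taylor t X -> exists s, taylor s M /\ reach s t.
Proof.
  intros [N' [H B]] HT. apply (taylor_bisim t _ _ B) in HT. clear B X.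
  revert t HT. induction H; intros t HT.
  - eapply sim_step; eauto.
  - exists t. split; auto. apply rt_refl.
  - destruct (IHclos_refl_trans2 _ HT) as [s1 [H1 R1]].
    destruct (IHclos_refl_trans1 _ H1) as [s0 [G0 R0]].
    exists s0. split; auto. eapply rt_trans; eauto.
Qed.

Lemma in_bsize x b : In x b -> rsize x <= bsize b.
Proof. induction b; simpl; intros H. destruct H. unfold bsize in *; simpl.
  destruct H as [<-|H]. lia. specialize (IHb H). lia. Qed.

Lemma sim_inf (R : term -> term -> Prop) (HR : forall a b, R a b -> inf_layer R a b) :
  forall n t, rsize t < n -> forall M N, inf_layer R M N -> taylor t N ->
  exists s, taylor s M /\ reach s t.
Proof.
  induction n; intros t Ht M N HL. lia.
  revert t Ht. induction HL; intros t Ht HT.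
  - eapply sim_star; eauto.
  - inversion HT; subst. simpl in Ht.
    match goal with HH : taylor ?x P' |- _ =>
      destruct (IHHL x ltac:(lia) HH) as [s1 [Hs Rs]] end.
    destruct (sim_star M (Lam P) (RLam s1)) as [s0 [G0 R0]]; auto. constructor; auto.
    exists s0. split; auto. eapply rt_trans; eauto. apply reach_lam; auto.
  - inversion HT; subst. simpl in Ht.
    match goal with HH : taylor ?x P' |- _ =>
      destruct (IHHL x ltac:(lia) HH) as [s1 [Hs Rs]] end.
    destruct (list_sim (fun y => taylor y Q) b) as [sb [F Hsb]].
    { intros x Hx. pose proof (in_bsize x b Hx) as Hxb. unfold bsize in Hxb.
      apply (IHn x) with (N := Q'); [lia| apply HR; auto| auto]. }
    destruct (sim_star M (App P Q) (RApp s1 sb)) as [s0 [G0 R0]]; auto. constructor; auto.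
    exists s0. split; auto. eapply rt_trans; eauto. apply reach_app; auto.
Qed.

Lemma dir12 M : (exists N : term, wf001 N /\ beta_normal N /\ beta_inf M N) ->
  (forall d : nat, exists s : rterm, taylor s M /\
      exists T : list rterm, is_nf_r s T /\ exists t : rterm, In t T /\ dpos d t).
Proof.
  intros [N [[P [HP PN]] [NN [R [HR RMN]]]]] d.
  destruct (dpos_approx P HP d N PN) as [t [Ht Dt]].
  destruct (sim_inf R HR (S (rsize t)) t ltac:(lia) M N (HR _ _ RMN) Ht) as [s [Hs Rs]].
  destruct (reach_nf s t Rs) as [T [HT InT]]. eapply taylor_normal; eauto.
  exists s. split; auto. exists T. split; auto. exists t. auto.
Qed.

Theorem mainTheorem18 (M : term) :
  wf001 M ->
  ((exists N : term, wf001 N /\ beta_normal N /\ beta_inf M N)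
   <->
   (forall d : nat, exists s : rterm, taylor s M /\
      exists T : list rterm, is_nf_r s T /\
        exists t : rterm, In t T /\ dpos d t)).
Proof.
  intros _. split. apply dir12. apply dir21.
Qed.
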